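(* Let $(A,\mathfrak m)$ be a local Prüfer ring which is not Gaussian and such that $\mathfrak m = Z(A)$, and let $I := \mathfrak m$. Then $A \bowtie I$ is a Prüfer ring and is not a Gaussian ring.
   Context: All rings are commutative with identity. For an ideal $I$ of a ring $A$, $A \bowtie I := \{(a, a+i) : a \in A, i \in I\}\subseteq A\times A$ (amalgamated duplication). $Z(A)$ is the set of zero-divisors of $A$. An ideal is regular if it contains a regular element. A ring $R$ is a Prüfer ring if every finitely generated regular ideal of $R$ is invertible. A ring $R$ is Gaussian if $c(gh)=c(g)c(h)$ for all $g,h\in R[x]$, where $c(p)$ is the ideal generated by the coefficients of $p$. *)

(* Defs.v *)
From HB Require Import structures.
From mathcomp Require Import all_boot all_order all_algebra.
Set Implicit Arguments.
Unset Strict Implicit.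
Unset Printing Implicit Defensive.
Import GRing.Theory.
Local Open Scope ring_scope.

Section Ideals.
Variable R : comNzRingType.

Definition is_ideal (I : {pred R}) : Prop :=
  [/\ 0 \in I,
      (forall x y, x \in I -> y \in I -> x + y \in I) &
      (forall a x, x \in I -> a * x \in I)].

Definition maximal_ideal (M : {pred R}) : Prop :=
  [/\ is_ideal M, 1 \notin M &
      forall J : {pred R}, is_ideal J -> 1 \notin J -> {subset M <= J} ->
        {subset J <= M}].

Definition local_ring (m : {pred R}) : Prop :=
  maximal_ideal m /\ forall M : {pred R}, maximal_ideal M -> M =i m.

Definition zero_divisor (x : R) : Prop := exists2 y : R, y != 0 & x * y = 0.
Definition regular (x : R) : Prop := forall y : R, x * y = 0 -> y = 0.

Definition ideal_eq (I J : R -> Prop) : Prop := forall x, I x <-> J x.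

Definition gen_ideal (s : seq R) (x : R) : Prop :=
  exists r : 'I_(size s) -> R, x = \sum_(k < size s) r k * s`_k.

Definition ideal_mul (I J : R -> Prop) (x : R) : Prop :=
  exists n (a b : 'I_n -> R),
    [/\ forall k, I (a k), forall k, J (b k) & x = \sum_(k < n) a k * b k].

Definition principal (a : R) (x : R) : Prop := exists r : R, x = a * r.

Definition finitely_generated (I : {pred R}) : Prop :=
  exists s : seq R, ideal_eq (fun x => x \in I) (gen_ideal s).

Definition regular_ideal (I : {pred R}) : Prop := exists2 a, a \in I & regular a.

Definition invertible_ideal (I : {pred R}) : Prop :=
  exists (J : {pred R}) (a : R),
    [/\ is_ideal J, regular a &
        ideal_eq (ideal_mul (fun x => x \in I) (fun x => x \in J)) (principal a)].

Definition Prufer_ring : Prop :=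
  forall I : {pred R}, is_ideal I -> finitely_generated I -> regular_ideal I ->
    invertible_ideal I.

Definition content (p : {poly R}) : R -> Prop := gen_ideal p.

Definition Gaussian_ring : Prop :=
  forall g h : {poly R},
    ideal_eq (content (g * h)) (ideal_mul (content g) (content h)).

End Ideals.

Section Duplication.
Variables (A : comNzRingType) (I : {pred A}) (hI : is_ideal I).

(* the (irrelevant) proof hI is kept as a parameter so that the ring
   structure on [dup hI] can be built *)
Definition dup_pred : {pred (A * A)%type} :=
  let _ := hI in fun p => p.2 - p.1 \in I.

Fact dup_subring_closed : subring_closed dup_pred.
Proof.
have [I0 ID IM] := hI.
have IN : forall x, x \in I -> - x \in I.
  by move=> x Ix; rewrite -mulN1r; apply: IM.
split.
- by rewrite unfold_in /= subrr.
- case=> a b; case=> c d; rewrite !unfold_in /= => Hab Hcd.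
  have -> : b - d - (a - c) = (b - a) + - (d - c).
    by rewrite !opprB addrACA [RHS]addrACA [- d + _]addrC.
  by apply: ID => //; apply: IN.
- case=> a b; case=> c d; rewrite !unfold_in /= => Hab Hcd.
  have -> : b * d - a * c = b * (d - c) + c * (b - a).
    by rewrite !mulrBr [c * b]mulrC addrA subrK [c * a]mulrC.
  by apply: ID; apply: IM.
Qed.

HB.instance Definition _ := GRing.isSubringClosed.Build (A * A)%type dup_pred
  dup_subring_closed.

(* A ⋈ I = {(a, a + i) : a ∈ A, i ∈ I} *)
Record dup : Type := Dup { dup_val :> (A * A)%type; _ : dup_val \in dup_pred }.

HB.instance Definition _ := [isSub for dup_val].
HB.instance Definition _ := [Choice of dup by <:].
HB.instance Definition _ := [SubChoice_isSubComNzRing of dup by <:].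

End Duplication.

Lemma local_ring_ideal (A : comNzRingType) (m : {pred A}) :
  local_ring m -> is_ideal m.
Proof. by case=> -[]. Qed.

(* Main.v *)
Require Import Defs.
From HB Require Import structures.
From mathcomp Require Import all_boot all_order all_algebra.
From mathcomp Require Import boolp classical_sets.
Import GRing.Theory.
Local Open Scope ring_scope.
Set Implicit Arguments.
Unset Strict Implicit.

Section Krull.
Variable A : comNzRingType.

Definition Pid (S : A -> Prop) (x : A) : Prop :=
  [/\ S 0, (forall u v, S u -> S v -> S (u + v)), (forall a u, S u -> S (a * u)),
      S x & ~ S 1].

Lemma exists_max_ideal (x : A) : (forall y, x * y <> 1) ->
  exists M : {pred A}, maximal_ideal M /\ x \in M.
Proof.
move=> hx.
pose T := {S : A -> Prop | Pid S x}.
pose R := fun s t : T => `[< forall z, sval s z -> sval t z >].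
have t0P : Pid (fun z => exists r, z = x * r) x.
  split.
  - by exists 0; rewrite mulr0.
  - by move=> u v [r1 ->] [r2 ->]; exists (r1 + r2); rewrite mulrDr.
  - by move=> a u [r ->]; exists (a * r); rewrite mulrCA.
  - by exists 1; rewrite mulr1.
  - by move=> [r] /esym; apply: hx.
have [||| t tmax] := @ZL_preorder T (exist (fun S => Pid S x) _ t0P) R.
- by move=> t; apply/asboolP.
- by move=> r s t /asboolP h1 /asboolP h2; apply/asboolP => z /h1 /h2.
- move=> C Ctot.
  have [[s0 Cs0]|nC] := pselect (exists s, C s); last first.
    by exists (exist (fun S => Pid S x) _ t0P) => s Cs; exfalso; apply: nC; exists s.
  pose U := fun z => exists s, C s /\ sval s z.
  have UP : Pid U x.
    case: (svalP s0) => h0 _ _ hx0 _.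
    split.
    - by exists s0.
    - move=> u v [s1 [Cs1 h1]] [s2 [Cs2 h2]].
      have [/asboolP l|/asboolP l] := Ctot _ _ Cs1 Cs2.
      + exists s2; split => //; case: (svalP s2) => _ hD _ _ _; apply: hD => //.
        exact: l.
      + exists s1; split => //; case: (svalP s1) => _ hD _ _ _; apply: hD => //.
        exact: l.
    - move=> a u [s1 [Cs1 h1]]; exists s1; split => //.
      by case: (svalP s1) => _ _ hM _ _; apply: hM.
    - by exists s0.
    - by move=> [s1 [Cs1 h1]]; by case: (svalP s1) => _ _ _ _ /(_ h1).
  by exists (exist (fun S => Pid S x) _ UP) => s Cs; apply/asboolP => z hz; exists s.
pose M : {pred A} := fun z => `[< sval t z >].
have [h0 hD hM hxt h1] := svalP t.
have memM z : (z \in M) = `[< sval t z >] by [].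
exists M; split; last by rewrite memM; apply/asboolP.
split.
- split; first by rewrite memM; apply/asboolP.
  + by move=> u v; rewrite !memM => /asboolP ? /asboolP ?; apply/asboolP; apply: hD.
  + by move=> a u; rewrite !memM => /asboolP ?; apply/asboolP; apply: hM.
- by rewrite memM; apply/negP => /asboolP.
- move=> J [J0 JD JM] J1 MJ.
  have JP : Pid (fun z => z \in J) x.
    split => //; first by apply: MJ; rewrite memM; apply/asboolP.
    exact/negP.
  have /tmax /asboolP h : R t (exist (fun S => Pid S x) _ JP).
    by apply/asboolP => z hz; apply: MJ; rewrite memM; apply/asboolP.
  by move=> z zJ; rewrite memM; apply/asboolP; apply: h.
Qed.

Lemma local_unit (m : {pred A}) : local_ring m -> forall x, x \notin m ->
  exists y, x * y = 1.
Proof.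
move=> [_ hm] x xm; apply: contrapT => hne.
have [M [MM xM]] : exists M : {pred A}, maximal_ideal M /\ x \in M.
  by apply: exists_max_ideal => y hy; apply: hne; exists y.
by move: xm; rewrite -(hm _ MM) xM.
Qed.
End Krull.

Lemma gen_ideal_nat (R : comNzRingType) (s : seq R) x :
  gen_ideal s x <-> exists r : nat -> R, x = \sum_(k < size s) r k * s`_k.
Proof.
split.
- move=> [r ->].
  exists (fun n => if insub n is Some k then r k else 0).
  apply: eq_bigr => k _.
  case: insubP => [k' _ /val_inj -> //|]; by rewrite ltn_ord.
- by move=> [r ->]; exists (fun k => r k).
Qed.

Section Dup.
Variables (A : comNzRingType) (m : {pred A}) (hI : is_ideal m).
Local Notation D := (dup hI).

Lemma diag_in (a : A) : (a, a) \in dup_pred hI.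
Proof. by rewrite unfold_in /= subrr; case: hI. Qed.

Definition iota (a : A) : D := @Dup A m hI (a, a) (diag_in a).
Definition pi (x : D) : A := (val x).1.

Lemma piK a : pi (iota a) = a. Proof. by []. Qed.

Lemma iota_zmod : zmod_morphism iota.
Proof. by move=> a b; apply: val_inj. Qed.
HB.instance Definition _ := GRing.isZmodMorphism.Build A D iota iota_zmod.
Lemma iota_mon : monoid_morphism iota.
Proof. by split; [apply: val_inj | move=> a b; apply: val_inj]. Qed.
HB.instance Definition _ := GRing.isMonoidMorphism.Build A D iota iota_mon.

Lemma pi_zmod : zmod_morphism pi.
Proof. by []. Qed.
HB.instance Definition _ := GRing.isZmodMorphism.Build D A pi pi_zmod.
Lemma pi_mon : monoid_morphism pi.
Proof. by []. Qed.
HB.instance Definition _ := GRing.isMonoidMorphism.Build D A pi pi_mon.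

Lemma iota_inj : injective iota.
Proof. by move=> a b /(congr1 pi). Qed.

Lemma content_iota (p : {poly A}) x :
  content (map_poly iota p) x <->
  exists r : nat -> D, x = \sum_(k < size p) r k * iota p`_k.
Proof.
rewrite /content gen_ideal_nat size_map_inj_poly; last 2 first.
- by move=> ? ? /iota_inj.
- by rewrite rmorph0.
split=> -[r ->]; exists r; apply: eq_bigr => k _; by rewrite coef_map.
Qed.

Lemma c_in (p : {poly A}) x : content p x -> content (map_poly iota p) (iota x).
Proof.
move=> /gen_ideal_nat [r ->]; apply/content_iota; exists (fun k => iota (r k)).
by rewrite rmorph_sum; apply: eq_bigr => k _; rewrite rmorphM.
Qed.

Lemma c_out (p : {poly A}) x : content (map_poly iota p) x -> content p (pi x).
Proof.
move=> /content_iota [r ->]; apply/gen_ideal_nat; exists (fun k => pi (r k)).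
by rewrite rmorph_sum; apply: eq_bigr => k _; rewrite rmorphM.
Qed.

Lemma gauss_transfer : Gaussian_ring D -> Gaussian_ring A.
Proof.
move=> GD g h x; split.
- move=> /c_in; rewrite rmorphM => /(GD _ _ _).1 [n [a [b [ha hb e]]]].
  have -> : x = pi (iota x) by []. rewrite e; exists n, (fun k => pi (a k)), (fun k => pi (b k)).
  split; [by move=> k; apply: c_out | by move=> k; apply: c_out|].
  by rewrite rmorph_sum; apply: eq_bigr => k _; rewrite rmorphM.
- move=> [n [a [b [ha hb ->]]]].
  set X := (X in _ X); have -> : X = pi (iota X) by [].
  apply: c_out; rewrite rmorphM; apply/(GD _ _ _).2.
  exists n, (fun k => iota (a k)), (fun k => iota (b k)).
  split; [by move=> k; apply: c_in | by move=> k; apply: c_in|].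
  by rewrite rmorph_sum; apply: eq_bigr => k _; rewrite rmorphM.
Qed.

End Dup.

Section Main.
Variables (A : comNzRingType) (m : {pred A}) (hloc : local_ring m)
  (hZ : forall x : A, x \in m <-> zero_divisor x).
Let hI := local_ring_ideal hloc.
Local Notation D := (dup hI).

Lemma regA x : x \notin m -> forall y, x * y = 0 -> y = 0.
Proof.
move=> xm y xy; apply: contrapT => /eqP yn0.
by move/negP: xm; apply; apply/hZ; exists y.
Qed.

Lemma addm x y : x \in m -> y \in m -> x + y \in m.
Proof. by case: hI => _ hD _; apply: hD. Qed.
Lemma mulm a x : x \in m -> a * x \in m.
Proof. by case: hI => _ _ hM; apply: hM. Qed.
Lemma oppm x : x \in m -> - x \in m.
Proof. by move=> h; rewrite -mulN1r; apply: mulm. Qed.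

Lemma dup_reg_unit (u : D) : regular u -> exists v : D, u * v = 1.
Proof.
case: u => -[a b] hab ureg.
have hab' : b - a \in m by have := hab; rewrite unfold_in.
have am : a \notin m.
  apply/negP => am.
  have bm : b \in m by have := addm am hab'; rewrite addrC subrK.
  have [z zn0 bz] := (hZ b).1 bm.
  have [zm|zm] := boolP (z \in m).
    have zin : (0, z) \in dup_pred hI by rewrite unfold_in /= subr0.
    have := ureg (@Dup A m hI (0, z) zin).
    have -> : @Dup A m hI (a, b) hab * @Dup A m hI (0, z) zin = 0.
      by apply: val_inj; change ((a * 0, b * z) = (0, 0)); rewrite mulr0 bz.
    move=> /(_ erefl) /(congr1 (fun w : D => (val w).2)) /= z0.
    by move/eqP: zn0; apply.
  have b0 : b = 0 by apply: (regA zm); rewrite mulrC.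
  have [y yn0 ay] := (hZ a).1 am.
  have [ym|ym] := boolP (y \in m).
    have yin : (y, 0) \in dup_pred hI by rewrite unfold_in /= sub0r; apply: oppm.
    have := ureg (@Dup A m hI (y, 0) yin).
    have -> : @Dup A m hI (a, b) hab * @Dup A m hI (y, 0) yin = 0.
      by apply: val_inj; change ((a * y, b * 0) = (0, 0)); rewrite mulr0 ay.
    move=> /(_ erefl) /(congr1 (fun w : D => (val w).1)) /= y0.
    by move/eqP: yn0; apply.
  have a0 : a = 0 by apply: (regA ym); rewrite mulrC.
  have := ureg 1.
  have -> : @Dup A m hI (a, b) hab * 1 = 0.
    by apply: val_inj; change ((a * 1, b * 1) = (0, 0)); rewrite a0 b0 !mul0r.
  move=> /(_ erefl) /eqP; by rewrite oner_eq0.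
have bm : b \notin m.
  apply/negP => bm; move/negP: am; apply.
  have := addm bm (oppm hab'); by rewrite opprB addrC subrK.
have [a' aa'] := local_unit hloc am.
have [b' bb'] := local_unit hloc bm.
have vin : (a', b') \in dup_pred hI.
  rewrite unfold_in /=.
  have -> : b' - a' = (a' * b') * - (b - a).
    have e1 : a' * b' * a = b' by rewrite mulrAC (mulrC a') aa' mul1r.
    have e2 : a' * b' * b = a' by rewrite -mulrA (mulrC b') bb' mulr1.
    by rewrite opprB mulrBr e1 e2.
  by apply: mulm; apply: oppm.
exists (@Dup A m hI (a', b') vin); apply: val_inj.
by change ((a * a', b * b') = (1, 1)); rewrite aa' bb'.
Qed.

Lemma dup_Prufer : Prufer_ring D.
Proof.
move=> I [I0 ID IM] _ [u uI ureg].
have [v uv] := dup_reg_unit ureg.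
have allI : forall x : D, x \in I.
  by move=> x; have := IM (x * v) u uI; rewrite -mulrA (mulrC v) uv mulr1.
exists (fun _ => true), 1; split.
- by split.
- by move=> y; rewrite mul1r.
- move=> x; split.
  + by move=> _; exists x; rewrite mul1r.
  + move=> _; exists 1%N, (fun _ => x), (fun _ => 1); split => //.
    by rewrite big_ord1 mulr1.
Qed.
End Main.

Theorem mainTheorem9 (A : comNzRingType) (m : {pred A})
  (hloc : local_ring m)
  (hPruf : Prufer_ring A)
  (hnG : ~ Gaussian_ring A)
  (hZ : forall x : A, x \in m <-> zero_divisor x) :
  Prufer_ring (@dup A m (local_ring_ideal hloc)) /\
  ~ Gaussian_ring (@dup A m (local_ring_ideal hloc)).
Proof.
split; first exact: dup_Prufer.
by move=> /gauss_transfer.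
Qed.
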